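(* Let $M$ be a duplicial module in a pre-additive category and $n\ge0$. Then $$\kappa_{n+1}s_{n,i}=\begin{cases}0,& i=0,\\ -s_{n,i-1}\kappa_n,& 1\le i\le n,\\ (s_{n,n+1}-s_{n,n})\kappa_n,& i=n+1.\end{cases}$$
   Context: Let $\mathcal A$ be a pre-additive category. Let $\Lambda_+$ be the category with objects $[n]$, $n\ge0$, where $\Lambda_+([m],[n])$ is the set of weakly monotone $f:\mathbb Z\to\mathbb Z$ with $f(j+m+1)=f(j)+n+1$ for all $j$ and $f(0)\ge0$. Define $\varepsilon^n_i:[n-1]\to[n]$ ($n\ge1$, $0\le i\le n$) by $\varepsilon^n_i(j)=j$ for $0\le j<i$, $j+1$ for $i\le j\le n-1$, and $\eta^n_i:[n+1]\to[n]$ ($0\le i\le n+1$) by $\eta^n_i(j)=j$ for $0\le j\le i$, $j-1$ for $i<j\le n+1$ (extended periodically). A duplicial module is a functor $M:\Lambda_+^{op}\to\mathcal A$; $M_n=M([n])$, $\partial_{n,i}=M(\varepsilon^n_i):M_n\to M_{n-1}$, $s_{n,i}=M(\eta^n_i):M_n\to M_{n+1}$. Convention $M_{-1}=0$, maps into/out of it zero. The Karoubi operator is $\kappa_n=(-1)^n(\partial_{n+1,0}s_{n,n+1}-s_{n-1,n}\partial_{n,0}):M_n\to M_n$ (so $\kappa_0=\partial_{1,0}s_{0,1}$). *)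

(* Defs.v *)
From HB Require Import structures.
From mathcomp Require Import all_boot all_order all_algebra.
Set Implicit Arguments. Unset Strict Implicit. Unset Printing Implicit Defensive.
Import Order.TTheory GRing.Theory Num.Theory.
Local Open Scope ring_scope.

Record preadditive := Preadditive {
  Obj : Type;
  Hom : Obj -> Obj -> zmodType;
  pacomp : forall a b c : Obj, Hom b c -> Hom a b -> Hom a c;
  idm : forall a : Obj, Hom a a;
  pacompA : forall a b c d (h : Hom c d) (g : Hom b c) (f : Hom a b),
      pacomp h (pacomp g f) = pacomp (pacomp h g) f;
  comp1f : forall a b (f : Hom a b), pacomp (idm b) f = f;
  compf1 : forall a b (f : Hom a b), pacomp f (idm a) = f;
  compDl : forall a b c (g1 g2 : Hom b c) (f : Hom a b),
      pacomp (g1 + g2) f = pacomp g1 f + pacomp g2 f;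
  compDr : forall a b c (g : Hom b c) (f1 f2 : Hom a b),
      pacomp g (f1 + f2) = pacomp g f1 + pacomp g f2
}.
Arguments pacomp {p a b c}.
Arguments idm {p a}.

(* f : Z -> Z is a morphism [m] -> [n] of Lambda_+ *)
Definition isLam (m n : nat) (f : int -> int) : Prop :=
  (forall j k : int, j <= k -> f j <= f k) /\
  (forall j : int, f (j + (m.+1)%:Z) = f j + (n.+1)%:Z) /\
  0 <= f 0.

(* epsilon^n_i : [n-1] -> [n]  (n >= 1), extended periodically *)
Definition eps (n i : nat) : int -> int := fun j =>
  let q := (j %/ n%:Z)%Z in let r := (j %% n%:Z)%Z in
  q * (n.+1)%:Z + (if r < i%:Z then r else r + 1).

(* eta^n_i : [n+1] -> [n], extended periodically *)
Definition eta (n i : nat) : int -> int := fun j =>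
  let q := (j %/ (n.+2)%:Z)%Z in let r := (j %% (n.+2)%:Z)%Z in
  q * (n.+1)%:Z + (if r <= i%:Z then r else r - 1).

(* A duplicial module: a (contravariant) functor Lambda_+^op -> A.
   [Mmor m n f] is M(f) : M_n -> M_m for f : [m] -> [n] in Lambda_+
   (its value on functions that are not morphisms is irrelevant). *)
Record duplicial (A : preadditive) := Duplicial {
  Mob : nat -> Obj A;
  Mmor : forall m n : nat, (int -> int) -> Hom (Mob n) (Mob m);
  Mext : forall m n f g, isLam m n f -> isLam m n g -> f =1 g ->
      Mmor m n f = Mmor m n g;
  Mid : forall n, Mmor n n id = idm;
  Mcomp : forall l m n f g, isLam m n f -> isLam l m g ->
      Mmor l n (f \o g) = pacomp (Mmor l m g) (Mmor m n f)
}.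

Section Ops.
Variables (A : preadditive) (M : duplicial A).
(* face maps: d n i = partial_{n+1,i} : M_{n+1} -> M_n *)
Definition face (n i : nat) : Hom (Mob M n.+1) (Mob M n) :=
  Mmor M n n.+1 (eps n.+1 i).
Definition degen (n i : nat) : Hom (Mob M n) (Mob M n.+1) :=
  Mmor M n.+1 n (eta n i).
(* Karoubi operator, with the convention M_{-1} = 0 *)
Definition kappa (n : nat) : Hom (Mob M n) (Mob M n) :=
  match n with
  | 0 => pacomp (face 0 0) (degen 0 1)
  | k.+1 => (pacomp (face k.+1 0) (degen k.+1 k.+2)
             - pacomp (degen k k.+1) (face k 0)) *~ ((-1) ^+ k.+1)
  end.
End Ops.

(* Main.v *)
Require Import Defs.
From mathcomp Require Import all_boot all_order all_algebra zify.
Import Order.TTheory GRing.Theory Num.Theory.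
Local Open Scope ring_scope.

Lemma divmod_char (p q r : int) : 0 < p -> 0 <= r < p ->
  ((q * p + r) %/ p)%Z = q /\ ((q * p + r) %% p)%Z = r.
Proof.
move=> p0 /andP[r0 rp]; have pn0 : p != 0 by rewrite gt_eqF.
split; first by rewrite divzMDl // divz_small ?addr0 // r0 /= abszE gtr0_norm.
by rewrite modzMDl modz_small // r0 rp.
Qed.

Lemma eps_val (n i : nat) (q r : int) : (0 < n)%N -> 0 <= r < n%:Z ->
  eps n i (q * n%:Z + r) = q * (n.+1)%:Z + (if r < i%:Z then r else r + 1).
Proof.
move=> n0 hr; rewrite /eps.
have n0' : 0 < n%:Z by rewrite ltz_nat.
by have [-> ->] := @divmod_char _ q _ n0' hr.
Qed.

Lemma eta_val (n i : nat) (q r : int) : 0 <= r < (n.+2)%:Z ->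
  eta n i (q * (n.+2)%:Z + r) = q * (n.+1)%:Z + (if r <= i%:Z then r else r - 1).
Proof.
move=> hr; rewrite /eta.
by have [-> ->] := @divmod_char _ q _ (isT : 0 < (n.+2)%:Z) hr.
Qed.

Lemma test (q n r : int) : 0 <= r -> q * (n + 1) + r >= q * (n+1).
Proof. lia. Qed.
Lemma test2 (q n r : int) : 0 <= r -> (q+1) * (n + 1) + r = q * (n+1) + n + 1 + r.
Proof. lia. Qed.

Lemma eps_valw (n i : nat) (q r : int) : (0 < n)%N -> 0 <= r < 2 * n%:Z ->
  eps n i (q * n%:Z + r) = if r < n%:Z then q * (n.+1)%:Z + (if r < i%:Z then r else r + 1)
    else (q + 1) * (n.+1)%:Z + (if r - n%:Z < i%:Z then r - n%:Z else r - n%:Z + 1).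
Proof.
move=> n0 hr; case: ifPn => h.
  by rewrite eps_val //; lia.
have -> : q * n%:Z + r = (q + 1) * n%:Z + (r - n%:Z) by lia.
by rewrite eps_val //; lia.
Qed.

Lemma eta_valw (n i : nat) (q r : int) : 0 <= r < 2 * (n.+2)%:Z ->
  eta n i (q * (n.+2)%:Z + r) = if r < (n.+2)%:Z then q * (n.+1)%:Z + (if r <= i%:Z then r else r - 1)
    else (q + 1) * (n.+1)%:Z + (if r - (n.+2)%:Z <= i%:Z then r - (n.+2)%:Z else r - (n.+2)%:Z - 1).
Proof.
move=> hr; case: ifPn => h.
  by rewrite eta_val //; lia.
have -> : q * (n.+2)%:Z + r = (q + 1) * (n.+2)%:Z + (r - (n.+2)%:Z) by lia.
by rewrite eta_val //; lia.
Qed.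

Lemma per_cases (p : nat) (P : int -> Prop) : (0 < p)%N ->
  (forall q r, 0 <= r < p%:Z -> P (q * p%:Z + r)) -> forall j, P j.
Proof.
move=> p0 H j; rewrite (divz_eq j p); apply: H.
have pn0 : p%:Z != 0 by rewrite eqz_nat -lt0n.
by rewrite modz_ge0 // ltz_pmod // ltz_nat.
Qed.

Ltac splits := repeat (case: ifPn => ?); try lia.

Lemma I2 (m : nat) : forall x, eta m 0 (eps m.+1 0 x) = x.
Proof.
apply: (@per_cases m.+1) => // q r hr.
rewrite eps_val //. splits. rewrite eta_val; last lia. splits.
Qed.

Lemma I1 (m i j : nat) : (i < j <= m.+2)%N ->
  forall x, eta m i (eta m.+1 j x) = eta m (j.-1) (eta m.+1 i x).
Proof.
move=> hij; apply: (@per_cases m.+3) => // q r hr.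
rewrite (eta_val m.+1 j q) // (eta_val m.+1 i q) //.
splits; rewrite !eta_valw; try lia; splits.
Qed.

Lemma I3 (k i : nat) : (1 <= i <= k.+1)%N ->
  forall x, eta k.+1 i (eps k.+2 0 x) = eps k.+1 0 (eta k i.-1 x).
Proof.
move=> hi; apply: (@per_cases k.+2) => // q r hr.
rewrite (eps_val k.+2 0 q) // (eta_val k i.-1 q) //.
splits; rewrite ?eta_valw ?eps_valw; try lia; splits.
Qed.

Lemma mono_step (f : int -> int) : (forall j, f j <= f (j + 1)) ->
  forall j k : int, j <= k -> f j <= f k.
Proof.
move=> H j k jk; have -> : k = j + (Posz `|k - j|%N) by rewrite gez0_abs ?subr_ge0 //; lia.
elim: `|k - j|%N => [|n IH]; first by rewrite addr0.
apply: (le_trans IH); have -> : j + n.+1%:Z = j + n%:Z + 1 by lia.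
exact: H.
Qed.

Lemma isLam_comp l m n f g : isLam m n f -> isLam l m g -> isLam l n (f \o g).
Proof.
move=> [f1 [f2 f3]] [g1 [g2 g3]]; split; last split.
- by move=> j k jk; apply: f1; apply: g1.
- by move=> j /=; rewrite g2 f2.
- by apply: le_trans f3 _; apply: f1.
Qed.

Lemma isLam_id n : isLam n n id.
Proof. by split; [|split]. Qed.

Lemma isLam_eps k i : isLam k k.+1 (eps k.+1 i).
Proof.
split; last split.
- apply: mono_step; apply: (@per_cases k.+1) => // q r hr.
  rewrite -addrA eps_val // eps_valw; try lia; splits.
- apply: (@per_cases k.+1) => // q r hr.
  have -> : q * k.+1%:Z + r + k.+1%:Z = (q + 1) * k.+1%:Z + r by lia.
  rewrite !eps_val //; splits.
- rewrite (_ : 0 = 0 * k.+1%:Z + 0) // eps_val //; splits.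
Qed.

Lemma isLam_eta k i : isLam k.+1 k (eta k i).
Proof.
split; last split.
- apply: mono_step; apply: (@per_cases k.+2) => // q r hr.
  rewrite -addrA eta_val // eta_valw; try lia; splits.
- apply: (@per_cases k.+2) => // q r hr.
  have -> : q * k.+2%:Z + r + k.+2%:Z = (q + 1) * k.+2%:Z + r by lia.
  rewrite !eta_val //; splits.
- rewrite (_ : 0 = 0 * k.+2%:Z + 0) // eta_val //; splits.
Qed.

Section Hom.
Variables (A : preadditive) (M : duplicial A).

Lemma compM l m n f g : isLam m n f -> isLam l m g ->
  pacomp (Mmor M l m g) (Mmor M m n f) = Mmor M l n (f \o g).
Proof. by move=> hf hg; rewrite (Mcomp M hf hg). Qed.

Lemma comp0l (a b c : Obj A) (f : Defs.Hom a b) : pacomp (0 : Defs.Hom b c) f = 0.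
Proof.
have := compDl (0 : Defs.Hom b c) 0 f; rewrite addr0 => h.
move: h; set x := pacomp _ _ => h.
by have := congr1 (fun y => y - x) h; rewrite subrr addrK => /esym.
Qed.

Lemma comp0r (a b c : Obj A) (g : Defs.Hom b c) : pacomp g (0 : Defs.Hom a b) = 0.
Proof.
have := compDr g (0 : Defs.Hom a b) 0; rewrite addr0 => h.
move: h; set x := pacomp _ _ => h.
by have := congr1 (fun y => y - x) h; rewrite subrr addrK => /esym.
Qed.

Lemma compNl (a b c : Obj A) (g : Defs.Hom b c) (f : Defs.Hom a b) : pacomp (- g) f = - pacomp g f.
Proof. by apply/eqP; rewrite -subr_eq0 opprK -compDl addNr comp0l. Qed.

Lemma compNr (a b c : Obj A) (g : Defs.Hom b c) (f : Defs.Hom a b) : pacomp g (- f) = - pacomp g f.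
Proof. by apply/eqP; rewrite -subr_eq0 opprK -compDr addNr comp0r. Qed.

Lemma compBl (a b c : Obj A) (g1 g2 : Defs.Hom b c) (f : Defs.Hom a b) :
  pacomp (g1 - g2) f = pacomp g1 f - pacomp g2 f.
Proof. by rewrite compDl compNl. Qed.

Lemma compBr (a b c : Obj A) (g : Defs.Hom b c) (f1 f2 : Defs.Hom a b) :
  pacomp g (f1 - f2) = pacomp g f1 - pacomp g f2.
Proof. by rewrite compDr compNr. Qed.

Lemma compMnl (a b c : Obj A) (g : Defs.Hom b c) (f : Defs.Hom a b) k : pacomp (g *+ k) f = pacomp g f *+ k.
Proof. elim: k => [|k IH]; first by rewrite !mulr0n comp0l. by rewrite !mulrS compDl IH. Qed.

Lemma compMnr (a b c : Obj A) (g : Defs.Hom b c) (f : Defs.Hom a b) k : pacomp g (f *+ k) = pacomp g f *+ k.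
Proof. elim: k => [|k IH]; first by rewrite !mulr0n comp0r. by rewrite !mulrS compDr IH. Qed.

Lemma compZl (a b c : Obj A) (g : Defs.Hom b c) (f : Defs.Hom a b) (z : int) : pacomp (g *~ z) f = pacomp g f *~ z.
Proof. case: z => k; by rewrite ?NegzE ?mulrNz ?compNl compMnl. Qed.

Lemma compZr (a b c : Obj A) (g : Defs.Hom b c) (f : Defs.Hom a b) (z : int) : pacomp g (f *~ z) = pacomp g f *~ z.
Proof. case: z => k; by rewrite ?NegzE ?mulrNz ?compNr compMnr. Qed.

Lemma H1 (m i j : nat) : (i < j <= m.+2)%N ->
  pacomp (degen M m.+1 j) (degen M m i) = pacomp (degen M m.+1 i) (degen M m j.-1).
Proof.
move=> hij; rewrite /degen !compM; try exact: isLam_eta.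
apply: Mext; try (apply: isLam_comp; exact: isLam_eta).
exact: I1.
Qed.

Lemma H2 (m : nat) : pacomp (face M m 0) (degen M m 0) = idm.
Proof.
rewrite /degen /face compM; try exact: isLam_eta; try exact: isLam_eps.
rewrite -(Mid M m); apply: Mext; [apply: isLam_comp; [exact: isLam_eta|exact: isLam_eps]|exact: isLam_id|].
exact: I2.
Qed.

Lemma H3 (k i : nat) : (1 <= i <= k.+1)%N ->
  pacomp (face M k.+1 0) (degen M k.+1 i) = pacomp (degen M k i.-1) (face M k 0).
Proof.
move=> hi; rewrite /degen /face !compM; try exact: isLam_eta; try exact: isLam_eps.
apply: Mext; try (apply: isLam_comp; solve [exact: isLam_eta|exact: isLam_eps]).
exact: I3.
Qed.
End Hom.

Theorem mainTheorem11 (A : preadditive) (M : duplicial A) (n : nat) :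
  pacomp (kappa M n.+1) (degen M n 0) = 0 /\
  (forall i : nat, (1 <= i <= n)%N ->
     pacomp (kappa M n.+1) (degen M n i) = - pacomp (degen M n i.-1) (kappa M n)) /\
  pacomp (kappa M n.+1) (degen M n n.+1)
    = pacomp (degen M n n.+1 - degen M n n) (kappa M n).
Proof.
split; last split.
- rewrite /kappa compZl compBl -!pacompA (@H1 _ M n 0 n.+2); last lia.
  by rewrite pacompA H2 comp1f H2 compf1 subrr mul0rz.
- case: n => [|k]; first by move=> i; lia.
  move=> i /andP[i1 ik].
  have P1 : pacomp (face M k.+2 0) (pacomp (degen M k.+2 k.+3) (degen M k.+1 i))
      = pacomp (degen M k.+1 i.-1) (pacomp (face M k.+1 0) (degen M k.+1 k.+2)).
    rewrite (@H1 _ M k.+1 i k.+3); last lia.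
    rewrite pacompA (@H3 _ M k.+1 i); last lia.
    by rewrite -pacompA.
  have P2 : pacomp (degen M k.+1 k.+2) (pacomp (face M k.+1 0) (degen M k.+1 i))
      = pacomp (degen M k.+1 i.-1) (pacomp (degen M k k.+1) (face M k 0)).
    rewrite (@H3 _ M k i); last lia.
    rewrite pacompA (@H1 _ M k i.-1 k.+2); last lia.
    by rewrite -pacompA.
  rewrite /kappa compZl compBl -!pacompA P1 P2 compZr compBr.
  by rewrite exprS mulN1r mulrNz.
- have P1 : pacomp (face M n.+1 0) (pacomp (degen M n.+1 n.+2) (degen M n n.+1))
      = pacomp (degen M n n) (pacomp (face M n 0) (degen M n n.+1)).
    rewrite (@H1 _ M n n.+1 n.+2); last lia.
    rewrite pacompA (@H3 _ M n n.+1); last lia.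
    by rewrite -pacompA.
  rewrite [kappa M n.+1]/kappa compZl compBl -!pacompA P1 -compBl.
  case: n P1 => [|k] P1.
    by rewrite /kappa expr1 mulrN1z -compNl opprB.
  rewrite [kappa M k.+1]/kappa compZr compBr.
  have -> : pacomp (degen M k.+1 k.+2 - degen M k.+1 k.+1) (pacomp (degen M k k.+1) (face M k 0)) = 0.
    by rewrite compBl !pacompA (@H1 _ M k k.+1 k.+2) ?subrr //; lia.
  by rewrite subr0 exprS mulN1r mulrNz -mulNrz -compNl opprB.
Qed.
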